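(* Let $q_0,\dots,q_{T-1}\in\mathcal S^{d-1}$ be a fixed sequence of recommendations spanning $\mathbb{R}^d$, and let step sizes be either constant $\eta_t=\eta$ or decreasing $\eta_t=\frac{\eta}{t+s}$. Define $\Phi_0=I$, $\Phi_{t+1}=(I+\eta_tq_tq_t^\top)\Phi_t$, and $F_T:\mathcal S^{d-1}\to\mathbb{R}^T$ by \[F_T(p_0)=\left(\frac{q_0^\top\Phi_0p_0}{\|\Phi_0p_0\|},\dots,\frac{q_{T-1}^\top\Phi_{T-1}p_0}{\|\Phi_{T-1}p_0\|}\right),\] which is the sequence of affinities $y_t=q_t^\top p_t$ generated by the dynamics $\tilde p_{t+1}=p_t+\eta_t(p_t^\top q_t)q_t$, $p_{t+1}=\tilde p_{t+1}/\|\tilde p_{t+1}\|_2$ from initial preference $p_0$. Then $F_T$ is locally invertible around every $p_0\in\mathcal S^{d-1}$: its differential at $p_0$, as a linear map from the tangent space of $\mathcal S^{d-1}$ at $p_0$ to $\mathbb{R}^T$, is injective.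
   Context: $\mathcal S^{d-1}$ is the unit sphere in $\mathbb{R}^d$, viewed as a smooth manifold. In the constant step-size setting $\eta>0$; in the decreasing setting $\eta,s$ are positive integers. *)

(* Defs.v *)
From HB Require Import structures.
From mathcomp Require Import all_boot all_order all_algebra.
From mathcomp Require Import all_classical all_reals all_analysis.
Set Implicit Arguments. Unset Strict Implicit. Unset Printing Implicit Defensive.
Import Order.TTheory GRing.Theory Num.Theory.
Import numFieldNormedType.Exports.
Local Open Scope ring_scope.

(* Euclidean (l2) norm of a column vector; MathComp-Analysis' matrix norm is
   the sup norm, so we define the Euclidean one explicitly. *)
Definition enorm (R : realType) (d : nat) (x : 'cV[R]_d) : R :=
  Num.sqrt (\sum_(i < d) x i 0 ^+ 2).

Definition dotv (R : realType) (d : nat) (u v : 'cV[R]_d) : R := (u^T *m v) 0 0.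

Definition step_size_rule (R : realType) (eta : nat -> R) : Prop :=
  (exists e : R, 0 < e /\ forall t, eta t = e)
  \/ (exists e s : nat, (0 < e)%N /\ (0 < s)%N /\
        forall t, eta t = e%:R / (t + s)%:R).

(* the sequence q_0, ..., q_{T-1}, extended by 0 outside (never used) *)
Definition qnat (R : realType) (d T : nat) (q : 'I_T -> 'cV[R]_d) (t : nat)
  : 'cV[R]_d := if insub t is Some i then q i else 0.

Fixpoint Phi (R : realType) (d T : nat) (eta : nat -> R)
  (q : 'I_T -> 'cV[R]_d) (t : nat) : 'M[R]_d :=
  match t with
  | 0 => 1%:M
  | t'.+1 => (1%:M + eta t' *: (qnat q t' *m (qnat q t')^T)) *m Phi eta q t'
  end.

(* F_T(p) = ( q_t^T Phi_t p / ||Phi_t p|| )_{t < T}, defined on all of R^d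
   (the sphere map is its restriction). *)
Definition FT (R : realType) (d T : nat) (eta : nat -> R)
  (q : 'I_T -> 'cV[R]_d) (p : 'cV[R]_d) : 'rV[R]_T :=
  \row_(i < T) (dotv (q i) (Phi eta q i *m p) / enorm (Phi eta q i *m p)).

Definition tangent (R : realType) (d : nat) (p v : 'cV[R]_d) : Prop :=
  dotv p v = 0.

(* Main.v *)
Require Import Defs.
From HB Require Import structures.
From mathcomp Require Import all_boot all_order all_algebra.
From mathcomp Require Import all_classical all_reals all_analysis.
Import Order.TTheory GRing.Theory Num.Theory.
Import numFieldNormedType.Exports.
Local Open Scope ring_scope.
Set Implicit Arguments. Unset Strict Implicit.

Section H.
Variables (R : realType) (d : nat).
Implicit Types (u v x : 'cV[R]_d).

Lemma lin_diff (W : normedModType R) (f : 'cV[R]_d -> W) :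
  (forall a x y, f (a *: x + y) = a *: f x + f y) ->
  forall p, differentiable f p.
Proof.
move=> fl p.
pose LM := GRing.isLinear.Build _ _ _ _ _ fl.
pose LF : {linear 'cV[R]_d -> W} := HB.pack f LM.
have -> : f = \sum_(k < d) (fun x : 'cV[R]_d => x k 0 *: f (delta_mx k 0)).
  apply/funext => x; rewrite fct_sumE.
  rewrite {1}(matrix_sum_delta x).
  under eq_bigr do rewrite big_ord1.
  have -> : f (\sum_(i < d) x i 0 *: delta_mx i 0) = LF (\sum_(i < d) x i 0 *: delta_mx i 0) by [].
  rewrite linear_sum; apply: eq_bigr => i _.
  by rewrite linearZ.
apply: differentiable_sum => k.
by apply: differentiableZl; exact: differentiable_coord.
Qed.

Lemma lin_derive (W : normedModType R) (f : 'cV[R]_d -> W) :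
  (forall a x y, f (a *: x + y) = a *: f x + f y) ->
  forall p v, 'D_v f p = f v.
Proof.
move=> fl p v.
pose LM := GRing.isLinear.Build _ _ _ _ _ fl.
pose LF : {linear 'cV[R]_d -> W} := HB.pack f LM.
have df := @lin_diff W f fl.
rewrite deriveE //.
have -> : f = LF by [].
rewrite diff_lin //.
by move=> x; apply: differentiable_continuous; exact: df.
Qed.

Definition cf (M : 'M[R]_d) (j : 'I_d) (p : 'cV[R]_d) : R := (M *m p) j 0.
Definition Qf (M : 'M[R]_d) (p : 'cV[R]_d) : R := \sum_(j < d) (M *m p) j 0 ^+ 2.

Lemma cf_lin M j a x y : cf M j (a *: x + y) = a *: cf M j x + cf M j y.
Proof. by rewrite /cf mulmxDr -scalemxAr !mxE. Qed.

Lemma QfE M : Qf M = \sum_(j < d) (cf M j * cf M j).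
Proof. by apply/funext => p; rewrite fct_sumE /Qf; apply: eq_bigr => j _; rewrite expr2. Qed.

Lemma Qf_diff M p : differentiable (Qf M) p.
Proof.
rewrite QfE; apply: differentiable_sum => j.
by apply: differentiableM; apply: lin_diff; exact: cf_lin.
Qed.

Lemma Qf_derive M p v : 'D_v (Qf M) p = 2 * dotv (M *m p) (M *m v).
Proof.
rewrite QfE derive_sum; last first.
  by move=> j; apply: diff_derivable; apply: differentiableM; apply: lin_diff; exact: cf_lin.
rewrite /dotv !mxE big_distrr; apply: eq_bigr => j _.
rewrite deriveM; try by apply: diff_derivable; apply: lin_diff; exact: cf_lin.
rewrite (@lin_derive _ _ (@cf_lin M j)) /cf !mxE /=.
by rewrite mulr2n mulrDl !mul1r.
Qed.

Lemma S_diff M p : 0 < Qf M p -> differentiable (fun x => enorm (M *m x)) p.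
Proof.
move=> Qp.
have -> : (fun x => enorm (M *m x)) = Num.sqrt \o Qf M by [].
apply: differentiable_comp; first exact: Qf_diff.
apply/derivable1_diffP.
by have [] := is_derive1_sqrt Qp.
Qed.

Lemma S_derive0 M p v : 0 < Qf M p -> dotv (M *m p) (M *m v) = 0 ->
  'D_v (fun x => enorm (M *m x)) p = 0.
Proof.
move=> Qp h0.
rewrite deriveE; last exact: S_diff.
have -> : (fun x => enorm (M *m x)) = Num.sqrt \o Qf M by [].
rewrite diff_comp; [|exact: Qf_diff|].
  rewrite /= -(@deriveE _ _ _ (Qf M) p v (Qf_diff M p)).
  rewrite Qf_derive h0 mulr0 deriv1E; last by have [] := is_derive1_sqrt Qp.
  by rewrite /= scale0r.
apply/derivable1_diffP.
by have [] := is_derive1_sqrt Qp.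
Qed.

Definition Df (M : 'M[R]_d) (u : 'cV[R]_d) (x : 'cV[R]_d) : R := dotv u (M *m x).
Definition Sf (M : 'M[R]_d) (x : 'cV[R]_d) : R := enorm (M *m x).
Definition Gf (M : 'M[R]_d) (u : 'cV[R]_d) (x : 'cV[R]_d) : R :=
  dotv u (M *m x) / enorm (M *m x).

Lemma Df_lin M u a x y : Df M u (a *: x + y) = a *: Df M u x + Df M u y.
Proof. by rewrite /Df /dotv mulmxDr -scalemxAr mulmxDr -scalemxAr !mxE. Qed.

Lemma Sf0 M x : Sf M x = 0 -> M *m x = 0.
Proof.
rewrite /Sf /enorm => /eqP; rewrite sqrtr_eq0 => H.
have H0 : \sum_(i < d) (M *m x) i 0 ^+ 2 = 0.
  by apply/eqP; rewrite eq_le H /=; apply: sumr_ge0 => i _; exact: sqr_ge0.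
apply/matrixP => i j; rewrite (ord1 j) [RHS]mxE.
have /psumr_eq0P := H0.
move=> /(_ (fun i _ => sqr_ge0 _)) /(_ i isT) /eqP.
by rewrite sqrf_eq0 => /eqP.
Qed.

Lemma GSD M u : Gf M u * Sf M = Df M u.
Proof.
apply/funext => x; change (Gf M u x * Sf M x = Df M u x).
rewrite /Gf /Df -/(Sf M x).
have [S0|S0] := eqVneq (Sf M x) 0.
  by rewrite S0 mulr0 (@Sf0 M x S0) /dotv mulmx0 mxE.
by rewrite divfK.
Qed.

Lemma Sf_pos M x : 0 < Qf M x -> Sf M x != 0.
Proof. by move=> Q; rewrite /Sf /enorm sqrtr_eq0 -ltNge. Qed.

Lemma Gf_diff M u p : 0 < Qf M p -> differentiable (Gf M u) p.
Proof.
move=> Qp.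
have -> : Gf M u = Df M u * (fun x => (Sf M x)^-1) by [].
apply: differentiableM; first by apply: lin_diff; exact: Df_lin.
by apply: differentiableV; [exact: S_diff | exact: Sf_pos].
Qed.

Lemma key M u p v : 0 < Qf M p -> dotv (M *m p) (M *m v) = 0 ->
  'D_v (Gf M u) p = 0 -> dotv u (M *m v) = 0.
Proof.
move=> Qp h0 hG.
have hS : 'D_v (Sf M) p = 0 := @S_derive0 M p v Qp h0.
have := @lin_derive _ _ (@Df_lin M u) p v.
rewrite -{1}GSD deriveM; first last.
- by apply: diff_derivable; exact: S_diff.
- by apply: diff_derivable; exact: Gf_diff.
by rewrite hG hS !scaler0 addr0 /Df => <-.
Qed.

Lemma dotvC u v : dotv u v = dotv v u.
Proof. by rewrite /dotv !mxE; apply: eq_bigr => k _; rewrite !mxE mulrC. Qed.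

Lemma dotv_mul u (A : 'M[R]_d) v : dotv (A *m u) v = dotv u (A^T *m v).
Proof. by rewrite /dotv trmx_mul mulmxA. Qed.

Lemma dotvvE u : dotv u u = \sum_(j < d) u j 0 ^+ 2.
Proof. by rewrite /dotv mxE; apply: eq_bigr => k _; rewrite mxE expr2. Qed.

Lemma QfE2 M p : Qf M p = dotv (M *m p) (M *m p).
Proof. by rewrite dotvvE. Qed.

Lemma dotv_eq0 u : dotv u u = 0 -> u = 0.
Proof.
rewrite dotvvE => H0; apply/matrixP => i j; rewrite (ord1 j) [RHS]mxE.
have /psumr_eq0P := H0.
move=> /(_ (fun i _ => sqr_ge0 _)) /(_ i isT) /eqP.
by rewrite sqrf_eq0 => /eqP.
Qed.

Lemma dotv_ge0 u : 0 <= dotv u u.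
Proof. by rewrite dotvvE; apply: sumr_ge0 => i _; exact: sqr_ge0. Qed.

Definition Am (e : R) (w : 'cV[R]_d) : 'M[R]_d := 1%:M + e *: (w *m w^T).

Lemma Am_sym e w : (Am e w)^T = Am e w.
Proof. by rewrite /Am linearD /= tr_scalar_mx linearZ /= trmx_mul trmxK. Qed.

Lemma wTv w v : dotv w v = 0 -> w^T *m v = 0.
Proof.
move=> h; apply/matrixP => i j; rewrite (ord1 i) (ord1 j) [RHS]mxE.
by rewrite -h.
Qed.

Lemma Am_fix e w v : dotv w v = 0 -> Am e w *m v = v.
Proof.
move=> h; rewrite /Am mulmxDl mul1mx -scalemxAl -mulmxA wTv // mulmx0 scaler0 addr0.
by [].
Qed.

Lemma dotvD u x y : dotv u (x + y) = dotv u x + dotv u y.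
Proof. by rewrite /dotv mulmxDr mxE. Qed.

Lemma dotvZ u a x : dotv u (a *: x) = a * dotv u x.
Proof. by rewrite /dotv -scalemxAr mxE. Qed.

Lemma Am_quad e w y :
  dotv y (Am e w *m y) = dotv y y + e * (dotv w y) ^+ 2.
Proof.
rewrite /Am mulmxDl mul1mx dotvD; congr (_ + _).
rewrite -scalemxAl -mulmxA (mx11_scalar (w^T *m y : 'M[R]_1)) -/(dotv w y).
by rewrite mul_mx_scalar !dotvZ mulrA (dotvC y w) expr2 mulrA.
Qed.

Lemma Am_inj e w (y : 'cV[R]_d) : 0 <= e -> Am e w *m y = 0 -> y = 0.
Proof.
move=> e0 h; apply: dotv_eq0.
have H := Am_quad e w y.
have Z : dotv y (Am e w *m y) = 0 by rewrite h /dotv mulmx0 mxE.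
have H2 : 0 <= e * dotv w y ^+ 2 by apply: mulr_ge0 => //; exact: sqr_ge0.
have H3 := dotv_ge0 y.
apply/eqP; rewrite eq_le H3 andbT.
by rewrite -Z H lerDl.
Qed.
End H.

Section P.
Variables (R : realType) (d T : nat) (q : 'I_T -> 'cV[R]_d) (eta : nat -> R).

Lemma qnatE (i : 'I_T) : qnat q i = q i.
Proof. by rewrite /qnat valK. Qed.

Lemma PhiS t : Phi eta q t.+1 = Am (eta t) (qnat q t) *m Phi eta q t.
Proof. by []. Qed.

Lemma Phi_inj (p : 'cV[R]_d) : (forall t, 0 <= eta t) -> p != 0 ->
  forall t, Phi eta q t *m p != 0.
Proof.
move=> e0 pn0; elim => [|t IH]; first by rewrite /= mul1mx.
rewrite PhiS -mulmxA; apply/negP => /eqP H.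
by move: IH; rewrite (Am_inj (e0 t) H) eqxx.
Qed.

Lemma Phi_fix (v : 'cV[R]_d) t :
  (forall s, (s < t)%N -> dotv (qnat q s) v = 0) ->
  Phi eta q t *m v = v /\ forall p, dotv (Phi eta q t *m p) v = dotv p v.
Proof.
elim: t => [|t IH] H; first by split => [|p]; rewrite /= mul1mx.
have [IH1 IH2] := IH (fun s hs => H s (ltnW hs)).
have Hf : Am (eta t) (qnat q t) *m v = v by apply: Am_fix; exact: H.
split => [|p]; rewrite PhiS -mulmxA.
  by rewrite IH1 Hf.
by rewrite dotv_mul Am_sym Hf IH2.
Qed.
End P.

Theorem proposition7 (R : realType) (d T : nat) (q : 'I_T -> 'cV[R]_d)
  (eta : nat -> R) :
  (forall i, enorm (q i) = 1) ->
  row_full (\matrix_(i < T) (q i)^T) ->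
  step_size_rule eta ->
  forall p0 : 'cV[R]_d, enorm p0 = 1 ->
    differentiable (FT eta q) p0 /\
    (forall v : 'cV[R]_d, tangent p0 v -> 'd (FT eta q) p0 v = 0 -> v = 0).
Proof.
move=> _ hfull hstep p0 hp0.
have eta0 : forall t, 0 <= eta t.
  case: hstep => [[e [e0 He]]|[e [s [e0 [s0 He]]]]] t; rewrite He.
    exact: ltW.
  by apply: divr_ge0; exact: ler0n.
have p0n0 : p0 != 0.
  apply/negP => /eqP p00; move: hp0; rewrite p00 /enorm.
  under eq_bigr do rewrite mxE expr0n /=.
  by rewrite big1 // sqrtr0 => /eqP; rewrite eq_sym oner_eq0.
have Qpos : forall i : 'I_T, 0 < Qf (Phi eta q i) p0.
  move=> i; rewrite QfE2 lt_def dotv_ge0 andbT.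
  apply/negP => /eqP /dotv_eq0 /eqP.
  by rewrite (negbTE (Phi_inj q eta0 p0n0 i)).
have FTE : FT eta q = \sum_(i < T) (fun p => Gf (Phi eta q i) (q i) p *: delta_mx 0 i).
  apply/funext => p; rewrite fct_sumE {1}(row_sum_delta (FT eta q p)).
  by apply: eq_bigr => i _; rewrite /FT mxE.
have dF : differentiable (FT eta q) p0.
  rewrite FTE; apply: differentiable_sum => i.
  by apply: differentiableZl; exact: Gf_diff.
split => // v tv dv.
have hG : forall i : 'I_T, 'D_v (Gf (Phi eta q i) (q i)) p0 = 0.
  move=> i; have := deriveE v dF; rewrite dv derive_mx; last exact: diff_derivable.
  move/matrixP/(_ 0 i); rewrite !mxE.
  have -> // : (fun t => FT eta q t 0 i) = Gf (Phi eta q i) (q i).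
  by apply/funext => t; rewrite /FT mxE.
have hq : forall t, (t <= T)%N -> forall s : 'I_T, (s < t)%N -> dotv (q s) v = 0.
  elim => [|t IH] ht s hs; first by [].
  case: (ltngtP s t) => [hst|hst|hst].
  - exact: (IH (ltnW ht)).
  - by move: hs; rewrite ltnS leqNgt hst.
  have [Hv Hp] : Phi eta q s *m v = v /\
      forall p, dotv (Phi eta q s *m p) v = dotv p v.
    apply: Phi_fix => s' hs'.
    have s'T : (s' < T)%N by apply: (ltn_trans hs'); exact: ltn_ord.
    rewrite -[s']/(val (Ordinal s'T)) qnatE.
    by apply: (IH (ltnW ht)); rewrite /= -hst.
  have h0 : dotv (Phi eta q s *m p0) (Phi eta q s *m v) = 0.
    by rewrite Hv Hp; exact: tv.
  have := key (u := q s) (Qpos s) h0 (hG s).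
  by rewrite Hv.
have Av : (\matrix_(i < T) (q i)^T) *m v = 0.
  apply/matrixP => i j; rewrite (ord1 j) [RHS]mxE.
  rewrite -(hq T (leqnn T) i (ltn_ord i)) /dotv !mxE; apply: eq_bigr => k _.
  by rewrite !mxE.
have [B HB] := row_fullP hfull.
by rewrite -(mul1mx v) -HB -mulmxA Av mulmx0.
Qed.
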